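(* Fix an association $\kappa$ in which every UE is served by at least one cell and every cell serves at least one UE, and fix a demand vector $\bm{d}\in\mathbb{R}^m_{>0}$. Let $\bm{p}\in\mathbb{R}^n_{>0}$, let $\alpha>1$, and set $\bm{p}'=\bm{p}/\alpha$. Let $\bm{x}$ be the fixed point $\bm{x}=\bm{f}(\bm{h}(\bm{x},\bm{p},\kappa),\bm{d},\kappa)$, and let $\bm{x}'$ be the fixed point $\bm{x}'=\bm{f}(\bm{h}(\bm{x}',\bm{p}',\kappa),\bm{d},\kappa)$. Then $\bm{x}'\ge\bm{x}$, that is, $x'_i\ge x_i$ for all $i\in\mathcal{I}$ and $\bm{x}'\neq\bm{x}$.
   Context: Cellular network model. $\mathcal{I}$ is a set of $n$ cells and $\mathcal{J}$ a set of $m$ UEs. For an association $\kappa\in\{0,1\}^{n\times m}$, let $\mathcal{I}_j=\{i:\kappa_{ij}=1\}$ and $\mathcal{J}_i=\{j:\kappa_{ij}=1\}$. $M,B>0$ are constants, $\sigma^2>0$ is the noise power and $g_{ij}>0$ are the channel gains. For $\bm{x}\in\mathbb{R}^n_{\ge0}$ and $\bm{p}\in\mathbb{R}^n_{>0}$: - $h_j(\bm{x},\bm{p},\kappa)=\dfrac{\sum_{i\in\mathcal{I}_j}p_ig_{ij}}{\sum_{k\in\mathcal{I}\setminus\mathcal{I}_j}p_kg_{kj}x_k+\sigma^2}$ (SINR of UE $j$); - $f_i(\bm{\gamma},\bm{d},\kappa)=\sum_{j\in\mathcal{J}_i}\dfrac{d_j}{MB\log_2(1+\gamma_j)}$ (load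 of cell $i$). It is known, and assumed here, that for fixed $\bm{p},\bm{d},\kappa$ the map $\bm{x}\mapsto\bm{f}(\bm{h}(\bm{x},\bm{p},\kappa),\bm{d},\kappa)$ is a standard interference function with a unique fixed point in $\mathbb{R}^n_{\ge0}$. The vector inequality $\bm{x}'\ge\bm{x}$ means componentwise $\ge$ with strict inequality in at least one component. *)

(* Defs.v *)
From HB Require Import structures.
From mathcomp Require Import all_boot all_order all_algebra.
From mathcomp Require Import reals exp.
Set Implicit Arguments. Unset Strict Implicit. Unset Printing Implicit Defensive.
Import Order.TTheory GRing.Theory Num.Theory.
Local Open Scope ring_scope.

(* Cells are indexed by 'I_n, UEs by 'I_m; kappa i j = true iff cell i serves UE j. *)

Definition log2 {R : realType} (y : R) : R := ln y / ln 2.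

Definition sinr {R : realType} {n m : nat} (x p : 'I_n -> R) (kappa : 'I_n -> 'I_m -> bool)
  (g : 'I_n -> 'I_m -> R) (sigma2 : R) (j : 'I_m) : R :=
  (\sum_(i < n | kappa i j) p i * g i j) /
  (\sum_(k < n | ~~ kappa k j) p k * g k j * x k + sigma2).

Definition load {R : realType} {n m : nat} (gamma : 'I_m -> R) (d : 'I_m -> R)
  (kappa : 'I_n -> 'I_m -> bool) (M B : R) (i : 'I_n) : R :=
  \sum_(j < m | kappa i j) d j / (M * B * log2 (1 + gamma j)).

(* the composed map x |-> f(h(x,p,kappa),d,kappa) *)
Definition loadmap {R : realType} {n m : nat} (p : 'I_n -> R) (d : 'I_m -> R)
  (kappa : 'I_n -> 'I_m -> bool) (g : 'I_n -> 'I_m -> R) (sigma2 M B : R)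
  (x : 'I_n -> R) : 'I_n -> R :=
  fun i => load (sinr x p kappa g sigma2) d kappa M B i.

(* Main.v *)
Require Import Defs.
From HB Require Import structures.
From mathcomp Require Import all_boot all_order all_algebra.
From mathcomp Require Import reals exp convex interval_inference.
From mathcomp Require Import ring lra.
Import Order.TTheory GRing.Theory Num.Theory.
Local Open Scope ring_scope.

Section Aux.
Local Open Scope convex_scope.
Lemma key (R : realType) (c t : R) : 0 < c -> 0 <= t -> t <= 1 ->
  t * ln (1 + c) <= ln (1 + t * c).
Proof.
move=> c0 t0 t1.
have := @concave_ln R (Itv01 t0 t1) (1 + c) 1 ltac:(by rewrite addr_gt0) ltr01.
rewrite !convRE /= ln1 mulr0 addr0 => H; apply: (le_trans H).
by rewrite /unstable.onem mulr1 mulrDr mulr1 addrAC subrKC.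
Qed.
End Aux.

Section Main.
Variables (R : realType) (n m : nat) (kappa : 'I_n -> 'I_m -> bool)
  (g : 'I_n -> 'I_m -> R) (sigma2 M B : R) (d : 'I_m -> R).
Hypotheses (M0 : 0 < M) (B0 : 0 < B) (s0 : 0 < sigma2) (g0 : forall i j, 0 < g i j)
  (kj : forall j, exists i, kappa i j) (ki : forall i, exists j, kappa i j)
  (d0 : forall j, 0 < d j).

Definition L (s : R) := M * B * log2 (1 + s).

Lemma L_gt0 s : 0 < s -> 0 < L s.
Proof.
move=> sp; rewrite /L /log2 mulr_gt0 ?mulr_gt0 ?divr_gt0 ?invr_gt0 ?ln_gt0 //; lra.
Qed.

Lemma L_le s s' : 0 < s -> s <= s' -> L s <= L s'.
Proof.
move=> sp ss; rewrite /L /log2; apply: ler_wpM2l; first by rewrite mulr_ge0 ?ltW.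
apply: ler_wpM2r; first by rewrite invr_ge0 ltW // ln_gt0 //; lra.
by rewrite ler_ln ?posrE; lra.
Qed.

Lemma L_lt s s' : 0 < s -> s < s' -> L s < L s'.
Proof.
move=> sp ss; rewrite /L /log2 ltr_pM2l ?mulr_gt0 // ltr_pM2r //.
  by rewrite ltr_ln ?posrE; lra.
by rewrite invr_gt0 ln_gt0 //; lra.
Qed.

Lemma L_scale s mu : 0 < s -> 1 <= mu -> L s <= mu * L (s / mu).
Proof.
move=> sp mu1; have mu0 : 0 < mu by lra.
have mi : 0 < mu^-1 by rewrite invr_gt0.
have := @key R s mu^-1 sp (ltW mi) ltac:(by rewrite invf_le1).
rewrite /L /log2 => H.
have l2 : 0 < (ln (2:R))^-1 by rewrite invr_gt0 ln_gt0 //; lra.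
have H' : ln (1 + s) <= mu * ln (1 + s / mu).
  by rewrite -(ler_pM2l mi) mulrA mulVf ?gt_eqF // mul1r [s / mu]mulrC.
have K : 0 <= M * B * (ln 2)^-1 * (mu * ln (1 + s / mu) - ln (1 + s)).
  apply: mulr_ge0; last by rewrite subr_ge0.
  by rewrite !mulr_ge0 ?ltW.
lra.
Qed.

Lemma div_le (a b e mu : R) : 0 < a -> 0 < b -> 0 < e -> b <= mu * a -> e / a <= mu * (e / b).
Proof.
move=> a0 b0 e0 h; rewrite mulrA ler_pdivlMr // mulrAC ler_pdivrMr //.
rewrite [e * b]mulrC -mulrA [e * a]mulrC mulrA ler_pM2r //.
Qed.

Lemma N_gt0 (q : 'I_n -> R) j : (forall i, 0 < q i) ->
  0 < \sum_(i < n | kappa i j) q i * g i j.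
Proof.
move=> q0; have [i ki'] := kj j.
rewrite (bigD1 i) //=.
have h1 : 0 < q i * g i j by rewrite mulr_gt0.
have h2 : 0 <= \sum_(k < n | kappa k j && (k != i)) q k * g k j.
  by apply: sumr_ge0 => k _; rewrite mulr_ge0 ?ltW.
by apply: (lt_le_trans h1); rewrite lerDl.
Qed.

Lemma I_ge0 (q y : 'I_n -> R) j : (forall i, 0 < q i) -> (forall i, 0 <= y i) ->
  0 <= \sum_(k < n | ~~ kappa k j) q k * g k j * y k.
Proof. move=> q0 y0; apply: sumr_ge0 => k _; apply: mulr_ge0 => //; apply: mulr_ge0; exact: ltW. Qed.

Lemma sinr_gt0 (q y : 'I_n -> R) j : (forall i, 0 < q i) -> (forall i, 0 <= y i) ->
  0 < sinr y q kappa g sigma2 j.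
Proof.
move=> q0 y0; rewrite /sinr divr_gt0 ?N_gt0 //.
by apply: ltr_wpDl => //; apply: I_ge0.
Qed.

Lemma sinr_anti (q y z : 'I_n -> R) j : (forall i, 0 < q i) -> (forall i, 0 <= y i) ->
  (forall i, y i <= z i) ->
  sinr z q kappa g sigma2 j <= sinr y q kappa g sigma2 j.
Proof.
move=> q0 y0 yz; rewrite /sinr; apply: ler_wpM2l; first exact/ltW/N_gt0.
have z0 : forall i, 0 <= z i by move=> i; apply: le_trans (yz i).
have Iy := @I_ge0 _ _ j q0 y0; have Iz := @I_ge0 _ _ j q0 z0.
have Dy : 0 < \sum_(k < n | ~~ kappa k j) q k * g k j * y k + sigma2 by apply: ltr_wpDl.
have Dz : 0 < \sum_(k < n | ~~ kappa k j) q k * g k j * z k + sigma2 by apply: ltr_wpDl.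
rewrite lef_pV2 ?posrE // lerD2r; apply: ler_sum => k _.
by apply: ler_wpM2l => //; apply: mulr_ge0; apply: ltW.
Qed.

Lemma sinr_alpha (q y : 'I_n -> R) (alpha : R) j : (forall i, 0 < q i) -> (forall i, 0 <= y i) ->
  1 < alpha ->
  sinr y (fun i => q i / alpha) kappa g sigma2 j < sinr y q kappa g sigma2 j.
Proof.
move=> q0 y0 a1; have a0 : 0 < alpha by lra.
rewrite /sinr.
have -> : \sum_(i < n | kappa i j) q i / alpha * g i j =
  (\sum_(i < n | kappa i j) q i * g i j) / alpha.
  by rewrite mulr_suml; apply: eq_bigr => i _; rewrite mulrAC.
have -> : \sum_(k < n | ~~ kappa k j) q k / alpha * g k j * y k =
  (\sum_(k < n | ~~ kappa k j) q k * g k j * y k) / alpha.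
  by rewrite mulr_suml; apply: eq_bigr => i _; rewrite -!mulrA [alpha^-1 * _]mulrC -!mulrA.
have N0 := @N_gt0 _ j q0; have I0 := @I_ge0 _ _ j q0 y0.
set N := \sum_(i < n | kappa i j) _ in N0 *.
set I := \sum_(k < n | ~~ kappa k j) _ in I0 *.
have D0 : 0 < I + sigma2 by apply: ltr_wpDl.
have D1 : 0 < I / alpha + sigma2.
  apply: ltr_wpDl => //; apply: divr_ge0 => //; exact: ltW.
rewrite ltr_pdivrMr // mulrAC ltr_pdivlMr //.
rewrite !mulrDr.
have -> : N / alpha * I = N * (I / alpha) by rewrite mulrAC -mulrA.
rewrite ltrD2l mulrAC ltr_pdivrMr // ltr_pMr //; exact: mulr_gt0.
Qed.

Lemma sinr_scale (q y : 'I_n -> R) (mu : R) j : (forall i, 0 < q i) -> (forall i, 0 <= y i) ->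
  1 <= mu ->
  sinr y q kappa g sigma2 j / mu <= sinr (fun i => mu * y i) q kappa g sigma2 j.
Proof.
move=> q0 y0 mu1; have mu0 : 0 < mu by lra.
rewrite /sinr.
have -> : \sum_(k < n | ~~ kappa k j) q k * g k j * (mu * y k) =
  mu * \sum_(k < n | ~~ kappa k j) q k * g k j * y k.
  by rewrite mulr_sumr; apply: eq_bigr => i _; rewrite mulrCA.
have N0 := @N_gt0 _ j q0; have I0 := @I_ge0 _ _ j q0 y0.
set N := \sum_(i < n | kappa i j) _ in N0 *.
set I := \sum_(k < n | ~~ kappa k j) _ in I0 *.
have D0 : 0 < I + sigma2 by apply: ltr_wpDl.
have D1 : 0 < mu * I + sigma2.
  apply: ltr_wpDl => //; apply: mulr_ge0 => //; exact: ltW.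
rewrite -mulrA -invfM; apply: ler_wpM2l; first exact: ltW.
rewrite lef_pV2 ?posrE ?mulr_gt0 //.
by rewrite mulrDl [I * mu]mulrC lerD2l ler_peMr // ltW.
Qed.

Lemma loadE (q y : 'I_n -> R) i : loadmap q d kappa g sigma2 M B y i =
  \sum_(j < m | kappa i j) d j / L (sinr y q kappa g sigma2 j).
Proof. by []. Qed.

Lemma load_mono (q y z : 'I_n -> R) i : (forall i, 0 < q i) -> (forall i, 0 <= y i) ->
  (forall i, y i <= z i) ->
  loadmap q d kappa g sigma2 M B y i <= loadmap q d kappa g sigma2 M B z i.
Proof.
move=> q0 y0 yz; have z0 : forall i, 0 <= z i by move=> k; apply: le_trans (yz k).
rewrite !loadE; apply: ler_sum => j _; apply: ler_wpM2l; first exact: ltW.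
rewrite lef_pV2 ?posrE ?L_gt0 ?sinr_gt0 //.
by apply: L_le; [apply: sinr_gt0 | apply: sinr_anti].
Qed.

Lemma load_strict (q y : 'I_n -> R) alpha i : (forall i, 0 < q i) -> (forall i, 0 <= y i) ->
  1 < alpha ->
  loadmap q d kappa g sigma2 M B y i < loadmap (fun k => q k / alpha) d kappa g sigma2 M B y i.
Proof.
move=> q0 y0 a1; have a0 : 0 < alpha by lra.
have qa : forall k, 0 < q k / alpha by move=> k; rewrite divr_gt0.
rewrite !loadE; apply: ltr_sum.
  by have [j kij] := ki i; apply/hasP; exists j; rewrite ?mem_index_enum.
move=> j _; rewrite ltr_pM2l // ltf_pV2 ?posrE ?L_gt0 ?sinr_gt0 //.
by apply: L_lt; [apply: sinr_gt0 | apply: sinr_alpha].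
Qed.

Lemma load_scale (q y : 'I_n -> R) mu i : (forall i, 0 < q i) -> (forall i, 0 <= y i) ->
  1 <= mu ->
  loadmap q d kappa g sigma2 M B (fun k => mu * y k) i <= mu * loadmap q d kappa g sigma2 M B y i.
Proof.
move=> q0 y0 mu1; have mu0 : 0 < mu by lra.
have my0 : forall k, 0 <= mu * y k by move=> k; apply: mulr_ge0 => //; exact: ltW.
rewrite !loadE mulr_sumr; apply: ler_sum => j _.
have sp := @sinr_gt0 _ _ j q0 y0; have smp := @sinr_gt0 _ _ j q0 my0.
apply: div_le; rewrite ?L_gt0 //.
apply: (le_trans (@L_scale _ _ sp mu1)); apply: ler_wpM2l; first exact: ltW.
apply: L_le; first by rewrite divr_gt0.
exact: sinr_scale.
Qed.

Lemma load_gt0 (q y : 'I_n -> R) i : (forall i, 0 < q i) -> (forall i, 0 <= y i) ->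
  0 < loadmap q d kappa g sigma2 M B y i.
Proof.
move=> q0 y0; rewrite loadE.
have hs : has (kappa i) (index_enum 'I_m).
  by have [j kij] := ki i; apply/hasP; exists j; rewrite ?mem_index_enum.
have := @ltr_sum R _ (index_enum 'I_m) (kappa i) (fun _ => 0)
  (fun j => d j / L (sinr y q kappa g sigma2 j)) hs.
rewrite big1_eq; apply => j _; apply: divr_gt0 => //.
by apply: L_gt0; apply: sinr_gt0.
Qed.

Lemma main_sec (alpha : R) (p x x' : 'I_n -> R) :
  (0 < n)%N ->
  (forall i, 0 < p i) ->
  1 < alpha ->
  (forall i, 0 <= x i) ->
  (forall i, 0 <= x' i) ->
  x = loadmap p d kappa g sigma2 M B x ->
  x' = loadmap (fun i => p i / alpha) d kappa g sigma2 M B x' ->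
  (forall i, x i <= x' i) /\ x' <> x.
Proof.
move=> n0 p0 a1 x0 x'0 Hx Hx'.
have a0 : 0 < alpha by lra.
have pa : forall k, 0 < p k / alpha by move=> k; rewrite divr_gt0.
have ex i : x i = loadmap p d kappa g sigma2 M B x i := congr1 (fun f => f i) Hx.
have ex' i : x' i = loadmap (fun i => p i / alpha) d kappa g sigma2 M B x' i :=
  congr1 (fun f => f i) Hx'.
have x'p : forall i, 0 < x' i.
  by move=> i; rewrite ex'; apply: load_gt0.
pose i0 : 'I_n := Ordinal n0.
split; last first.
  move=> E; have h := @load_strict _ _ _ i0 p0 x0 a1.
  have h1 : loadmap p d kappa g sigma2 M B x i0 = x i0 by rewrite -ex.
  have h2 : loadmap (fun i => p i / alpha) d kappa g sigma2 M B x i0 = x i0.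
    by rewrite -{1}E -ex' E.
  by move: h; rewrite h1 h2 ltxx.
case: (@arg_maxP _ _ _ i0 xpredT (fun i => x i / x' i) isT) => k _ Hk.
set mu := x k / x' k in Hk.
have [mu1 | mu1] := leP mu 1.
  move=> i; have := le_trans (Hk i isT) mu1.
  by rewrite ler_pdivrMr // mul1r.
have xle : forall i, x i <= mu * x' i.
  by move=> i; rewrite -ler_pdivrMr //; exact: Hk.
have mx0 : forall k, 0 <= mu * x' k by move=> j; apply: mulr_ge0 => //; lra.
have h1 := @load_mono _ _ _ k p0 x0 xle.
have h2 := @load_strict _ _ _ k p0 mx0 a1.
have h3 := @load_scale _ _ _ k pa x'0 (ltW mu1).
have : x k < x k.
  rewrite {1}ex; apply: (le_lt_trans h1); apply: (lt_le_trans h2); apply: (le_trans h3).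
  by rewrite -ex' /mu divfK // gt_eqF.
by rewrite ltxx.
Qed.
End Main.

Theorem lemma3 (R : realType) (n m : nat) (kappa : 'I_n -> 'I_m -> bool)
  (g : 'I_n -> 'I_m -> R) (sigma2 M B alpha : R) (d : 'I_m -> R) (p x x' : 'I_n -> R) :
  (0 < n)%N -> 0 < M -> 0 < B -> 0 < sigma2 ->
  (forall i j, 0 < g i j) ->
  (forall j, exists i, kappa i j) ->
  (forall i, exists j, kappa i j) ->
  (forall j, 0 < d j) ->
  (forall i, 0 < p i) ->
  1 < alpha ->
  (forall i, 0 <= x i) ->
  (forall i, 0 <= x' i) ->
  x = loadmap p d kappa g sigma2 M B x ->
  x' = loadmap (fun i => p i / alpha) d kappa g sigma2 M B x' ->
  (forall i, x i <= x' i) /\ x' <> x.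
Proof.
move=> n0 M0 B0 s0 g0 kj ki d0 p0 a1 x0 x'0 Hx Hx'.
exact: (@main_sec R n m kappa g sigma2 M B d M0 B0 s0 g0 kj ki d0 alpha p x x' n0 p0 a1 x0 x'0 Hx Hx').
Qed.
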